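(* $\mathsf{GK(A_m)}$ admits cut-elimination: every sequent derivable in $\mathsf{GK(A_m)}$ has a $\mathsf{GK(A_m)}$-derivation containing no application of the rule (cut).
   Context: $\mathcal{L}_{A_m}^{\Box}$-formulas are built from a countably infinite set of variables using binary $\to$ and unary $\Box$. A sequent $\Gamma\Rightarrow\Delta$ is an ordered pair of finite multisets of formulas; $\Gamma,\Delta$ is multiset union, $n\Gamma$ is $\Gamma$ repeated $n$ times, $n[\varphi]$ is $n$ copies of $\varphi$, $\Box\Gamma=[\Box\varphi:\varphi\in\Gamma]$. The calculus $\mathsf{GK(A_m)}$ has rules: (id) $\Delta\Rightarrow\Delta$; (cut) from $\Gamma,\varphi\Rightarrow\Delta$ and $\Pi\Rightarrow\varphi,\Sigma$ infer $\Gamma,\Pi\Rightarrow\Sigma,\Delta$; (mix) from $\Gamma\Rightarrow\Delta$ and $\Pi\Rightarrow\Sigma$ infer $\Gamma,\Pi\Rightarrow\Sigma,\Delta$; (sc$_n$) from $n\Gamma\Rightarrow n\Delta$ infer $\Gamma\Rightarrow\Delta$ ($n\ge2$); ($\to\Rightarrow$) from $\Gamma,\psi\Rightarrow\varphi,\Delta$ infer $\Gamma,\varphi\to\psi\Rightarrow\Delta$; ($\Rightarrow\to$) from $\Gamma,\varphi\Rightarrow\psi,\Delta$ infer $\Gamma\Rightarrow\varphi\to\psi,\Delta$; ($\Box_n$) from $\Gamma\Rightarrow n[\varphi]$ infer $\Box\Gamma\Rightarrow n[\Box\varphi]$ ($n\ge0$). A derivation is a finite tree of sequents in which each node with its parents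 is a rule instance. *)

(* Defs.v *)
From HB Require Import structures.
From mathcomp Require Import all_boot.
Set Implicit Arguments. Unset Strict Implicit. Unset Printing Implicit Defensive.

Inductive form : Type :=
| Var : nat -> form
| Imp : form -> form -> form
| Box : form -> form.

Definition form_eq_dec (a b : form) : {a = b} + {a <> b}.
Proof. decide equality; exact: (fun m n : nat => decP (@eqP _ m n)). Defined.

Definition form_eqb (a b : form) : bool := if form_eq_dec a b then true else false.
Lemma form_eqP : Equality.axiom form_eqb.
Proof. by move=> a b; rewrite /form_eqb; case: form_eq_dec => h; constructor. Qed.
HB.instance Definition _ := hasDecEq.Build form form_eqP.

Definition mrep (n : nat) (G : seq form) : seq form := flatten (nseq n G).

(* A sequent is a pair of finite multisets, represented
   by lists considered up to permutation: every rule may conclude any sequent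
   whose antecedent/succedent are permutations of the displayed ones.
   The boolean [c] says whether the rule (cut) is available. *)
Inductive GK (c : bool) : seq form -> seq form -> Prop :=
| GK_id : forall D G' D', perm_eq G' D -> perm_eq D' D -> GK c G' D'
| GK_cut : forall G P S D phi G' D',
    c = true ->
    GK c (G ++ [:: phi]) D -> GK c P (phi :: S) ->
    perm_eq G' (G ++ P) -> perm_eq D' (S ++ D) -> GK c G' D'
| GK_mix : forall G D P S G' D',
    GK c G D -> GK c P S ->
    perm_eq G' (G ++ P) -> perm_eq D' (S ++ D) -> GK c G' D'
| GK_sc : forall n G D G' D', 2 <= n ->
    GK c (mrep n G) (mrep n D) ->
    perm_eq G' G -> perm_eq D' D -> GK c G' D'
| GK_impL : forall G D phi psi G' D',
    GK c (G ++ [:: psi]) (phi :: D) ->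
    perm_eq G' (G ++ [:: Imp phi psi]) -> perm_eq D' D -> GK c G' D'
| GK_impR : forall G D phi psi G' D',
    GK c (G ++ [:: phi]) (psi :: D) ->
    perm_eq G' G -> perm_eq D' (Imp phi psi :: D) -> GK c G' D'
| GK_box : forall n G phi G' D',
    GK c G (nseq n phi) ->
    perm_eq G' (map Box G) -> perm_eq D' (nseq n (Box phi)) -> GK c G' D'.

(* Main.v *)
Require Import Defs.
From mathcomp Require Import all_boot zify.
Set Implicit Arguments. Unset Strict Implicit. Unset Printing Implicit Defensive.

Notation D := (GK false).

Fixpoint remk (k : nat) (x : form) (s : seq form) : seq form :=
  if k is k'.+1 then rem x (remk k' x s) else s.

Lemma count_remk y k x s : count_mem y (remk k x s) = count_mem y s - (x == y) * k.
Proof. elim: k => [|k IH] /=; first by rewrite muln0 subn0.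
rewrite count_mem_rem IH; case: (x == y) => /=; lia. Qed.

Lemma count_mrep y n s : count_mem y (mrep n s) = n * count_mem y s.
Proof. rewrite /mrep; elim: n => [|n IH] //=. rewrite count_cat IH mulSn //. Qed.

Ltac to_counts y :=
  repeat match goal with H : is_true (perm_eq _ _) |- _ => move/permP/(_ (pred1 y)): H end;
  repeat match goal with H : is_true (_ <= _) |- _ => move: H end;
  repeat match goal with H : @eq nat _ _ |- _ => move: H end;
  do 3 rewrite /= ?count_cat ?count_nseq ?count_mrep ?count_remk ?count_mem_rem /=.
Ltac bsplit := repeat match goal with |- context [(?a == ?b)] => case: (a == b) => /= end.
Ltac arith := rewrite ?mul1n ?muln1 ?mul0n ?muln0 ?mulnBr ?mulnDr ?mulnA ?mul1n ?muln1 ?mul0n ?muln0; first [lia | nia].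

Ltac cf x := to_counts x; rewrite ?eqxx /=; intros; arith.
Ltac solve_perm0 := let y := fresh "y" in apply/allP => y _; apply/eqP; to_counts y; bsplit; intros; arith.
Ltac solve_perm x := let y := fresh "y" in apply/allP => y _; apply/eqP; to_counts y;
  let E := fresh "E" in
  case: (eqVneq x y) => [E|E]; [rewrite -?E ?eqxx /= | rewrite ?(negbTE E) /=]; bsplit; intros; arith.

Lemma test x (G : seq form) j k c : k <= count_mem x G -> perm_eq (mrep j (remk k x G)) c -> 
  perm_eq (mrep j G) (c ++ nseq (j * k) x).
Proof. move=> hk hc. solve_perm x. Qed.
Lemma Did G : D G G.
Proof. by apply: (@GK_id false G). Qed.

Lemma Dperm G Dl G' D' : D G Dl -> perm_eq G' G -> perm_eq D' Dl -> D G' D'.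
Proof.
move=> d hG hD; apply: (GK_mix d (Did [::])); first by rewrite cats0.
by [].
Qed.

Lemma Dmix G1 D1 G2 D2 : D G1 D1 -> D G2 D2 -> D (G1 ++ G2) (D2 ++ D1).
Proof. by move=> d1 d2; apply: (GK_mix d1 d2). Qed.

Lemma Dmixp G1 D1 G2 D2 G' D' : D G1 D1 -> D G2 D2 ->
  perm_eq G' (G1 ++ G2) -> perm_eq D' (D1 ++ D2) -> D G' D'.
Proof. move=> d1 d2 h1 h2; apply: (Dperm (Dmix d1 d2)) => //. solve_perm0. Qed.

Lemma Drep n G Dl : D G Dl -> D (mrep n G) (mrep n Dl).
Proof.
move=> d; elim: n => [|n IH]; first exact: Did.
apply: (Dmixp d IH); rewrite /mrep /=; solve_perm0.
Qed.

Lemma Dsc n G Dl : 0 < n -> D (mrep n G) (mrep n Dl) -> D G Dl.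
Proof.
case: n => [//|[|n]] _ d.
- by apply: (Dperm d); rewrite /mrep /= cats0.
- by apply: (@GK_sc false n.+2 G Dl).
Qed.

Lemma DimpL G b a Dl : D (G ++ [:: b]) (a :: Dl) -> D (G ++ [:: Imp a b]) Dl.
Proof. move=> d; by apply: (GK_impL d). Qed.

Lemma DimpR G b a Dl : D (G ++ [:: a]) (b :: Dl) -> D G (Imp a b :: Dl).
Proof. move=> d; by apply: (GK_impR d). Qed.

Lemma DimpL_rep j G a b Dl : D (G ++ nseq j b) (nseq j a ++ Dl) -> D (G ++ nseq j (Imp a b)) Dl.
Proof.
elim: j G Dl => [|j IH] G Dl d /=; first by [].
have d1 : D ((G ++ nseq j b) ++ [:: b]) (a :: (nseq j a ++ Dl)).
  apply: (Dperm d); solve_perm0.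
have d2 := DimpL d1.
have d3 : D ((G ++ [:: Imp a b]) ++ nseq j b) (nseq j a ++ Dl).
  apply: (Dperm d2); solve_perm0.
apply: (Dperm (IH _ _ d3)); solve_perm0.
Qed.

Lemma DimpR_rep j G a b Dl : D (G ++ nseq j a) (nseq j b ++ Dl) -> D G (nseq j (Imp a b) ++ Dl).
Proof.
elim: j G Dl => [|j IH] G Dl d /=; first by move: d; rewrite cats0.
have d1 : D ((G ++ nseq j a) ++ [:: a]) (b :: (nseq j b ++ Dl)).
  apply: (Dperm d); solve_perm0.
have d2 := DimpR d1.
have d3 : D (G ++ nseq j a) (nseq j b ++ (Imp a b :: Dl)).
  apply: (Dperm d2); solve_perm0.
apply: (Dperm (IH _ _ d3)); solve_perm0.
Qed.

Lemma Dbox G n p : D G (nseq n p) -> D (map Box G) (nseq n (Box p)).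
Proof. move=> d; by apply: (GK_box d). Qed.

Lemma count_box_box p G : count_mem (Box p) (map Box G) = count_mem p G.
Proof. elim: G => //= q G ->. suff -> : (Box q == Box p) = (q == p) by [].
by apply/eqP/eqP => [[->]|->]. Qed.
Lemma count_box_imp a b G : count_mem (Imp a b) (map Box G) = 0.
Proof. by elim: G. Qed.
Lemma count_box_var v G : count_mem (Var v) (map Box G) = 0.
Proof. by elim: G. Qed.
Lemma eq_box_imp p a b : (Box p == Imp a b) = false. Proof. by apply/eqP. Qed.
Lemma eq_box_var p v : (Box p == Var v) = false. Proof. by apply/eqP. Qed.
Lemma eq_box_box p q : (Box p == Box q) = (p == q).
Proof. by apply/eqP/eqP => [[->]|->]. Qed.

Lemma mrep1 G : mrep 1 G = G. Proof. by rewrite /mrep /= cats0. Qed.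

Lemma InvL a b x : x = Imp a b -> forall G0 D0, D G0 D0 -> forall k, k <= count_mem x G0 ->
  D (remk k x G0 ++ nseq k b) (nseq k a ++ D0).
Proof.
move=> Ex.
move=> G0 D0; elim => {G0 D0}.
- move=> Dl G' D' hG hD k hk.
  have S1 : D [:: b] [:: x; a].
    rewrite Ex; apply: DimpR; apply: (Dperm (Did [:: b; a])); solve_perm0.
  apply: (Dmixp (Did (remk k x G')) (Drep k S1)); solve_perm x.
- by [].
- move=> G Dl P S G' D' d1 IH1 d2 IH2 hG hD k hk.
  have h2 : k - minn k (count_mem x G) <= count_mem x P.
    by to_counts x; intros; lia.
  apply: (Dmixp (IH1 (minn k (count_mem x G)) (geq_minr _ _)) (IH2 _ h2)); solve_perm x.
- move=> n G Dl G' D' hn d IH hG hD k hk.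
  have h : n * k <= count_mem x (mrep n G).
    by cf x.
  apply: (Dsc (n:=n)); first lia.
  apply: (Dperm (IH _ h)); rewrite /mrep; solve_perm x.
- move=> G Dl phi psi G' D' d IH hG hD k hk.
  case: (leqP k (count_mem x G)) => hkG.
  + have h : k <= count_mem x (G ++ [:: psi]) by cf x.
    have d1 := IH _ h.
    have d2 : D ((remk k x G ++ nseq k b) ++ [:: psi]) (phi :: (nseq k a ++ Dl)).
      apply: (Dperm d1); solve_perm x.
    apply: (Dperm (DimpL d2)); solve_perm x.
  + have E : Imp phi psi = x.
      apply/eqP; case E: (Imp phi psi == x) => //; exfalso.
      to_counts x; rewrite E /=; intros; lia.
    rewrite Ex in E; case: E => ? ?; subst phi psi.
    have h : k.-1 <= count_mem x (G ++ [:: b]) by cf x.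
    case: k hk hkG h => [//|k] hk hkG h /=.
    rewrite -Ex in hG; apply: (Dperm (IH _ h)); solve_perm x.
- move=> G Dl phi psi G' D' d IH hG hD k hk.
  have h : k <= count_mem x (G ++ [:: phi]).
    by cf x.
  have d1 := IH _ h.
  have d2 : D ((remk k x G ++ nseq k b) ++ [:: phi]) (psi :: (nseq k a ++ Dl)).
    apply: (Dperm d1); solve_perm x.
  apply: (Dperm (DimpR d2)); solve_perm x.
- move=> n G phi G' D' d IH hG hD k hk.
  have k0 : k = 0.
    move/permP/(_ (pred1 x)): hG => /= hG. rewrite hG Ex count_box_imp in hk; lia.
  subst k; apply: (Dperm (Dbox d)); solve_perm0.
Qed.

Lemma InvR a b x : x = Imp a b -> forall G0 D0, D G0 D0 -> forall k, k <= count_mem x D0 ->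
  D (G0 ++ nseq k a) (nseq k b ++ remk k x D0).
Proof.
move=> Ex.
move=> G0 D0; elim => {G0 D0}.
- move=> Dl G' D' hG hD k hk.
  have S1 : D [:: x; a] [:: b].
    have S0 : D ([:: a] ++ [:: Imp a b]) [:: b].
      apply: DimpL; apply: (Dperm (Did [:: a; b])); solve_perm0.
    rewrite Ex; apply: (Dperm S0); solve_perm0.
  apply: (Dmixp (Did (remk k x D')) (Drep k S1)); solve_perm x.
- by [].
- move=> G Dl P S G' D' d1 IH1 d2 IH2 hG hD k hk.
  have h2 : k - minn k (count_mem x Dl) <= count_mem x S by cf x.
  apply: (Dmixp (IH1 (minn k (count_mem x Dl)) (geq_minr _ _)) (IH2 _ h2)); solve_perm x.
- move=> n G Dl G' D' hn d IH hG hD k hk.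
  have h : n * k <= count_mem x (mrep n Dl) by cf x.
  apply: (Dsc (n:=n)); first lia.
  apply: (Dperm (IH _ h)); rewrite /mrep; solve_perm x.
- move=> G Dl phi psi G' D' d IH hG hD k hk.
  have h : k <= count_mem x (phi :: Dl) by cf x.
  have d1 := IH _ h.
  have d2 : D ((G ++ nseq k a) ++ [:: psi]) (phi :: (nseq k b ++ remk k x Dl)).
    apply: (Dperm d1); solve_perm x.
  apply: (Dperm (DimpL d2)); solve_perm x.
- move=> G Dl phi psi G' D' d IH hG hD k hk.
  case: (leqP k (count_mem x Dl)) => hkG.
  + have h : k <= count_mem x (psi :: Dl) by cf x.
    have d1 := IH _ h.
    have d2 : D ((G ++ nseq k a) ++ [:: phi]) (psi :: (nseq k b ++ remk k x Dl)).
      apply: (Dperm d1); solve_perm x.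
    apply: (Dperm (DimpR d2)); solve_perm x.
  + have E : Imp phi psi = x.
      apply/eqP; case E: (Imp phi psi == x) => //; exfalso.
      to_counts x; rewrite E /=; intros; lia.
    rewrite Ex in E; case: E => ? ?; subst phi psi.
    have h : k.-1 <= count_mem x (b :: Dl) by cf x.
    case: k hk hkG h => [//|k] hk hkG h /=.
    rewrite -Ex in hD; apply: (Dperm (IH _ h)); solve_perm x.
- move=> n G phi G' D' d IH hG hD k hk.
  have k0 : k = 0.
    move: hk; to_counts x; rewrite Ex eq_box_imp /=; intros; lia.
  subst k; apply: (Dperm (Dbox d)); solve_perm0.
Qed.

Definition CM x := forall G0 D0, D G0 D0 -> forall a, a <= count_mem x G0 -> a <= count_mem x D0 ->
  D (remk a x G0) (remk a x D0).
Definition MC x := forall G0 D0, D G0 D0 -> forall k, k <= count_mem x G0 ->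
  forall P S, D P S -> forall j, j <= count_mem x S ->
  D (mrep j (remk k x G0) ++ mrep k P) (mrep k (remk j x S) ++ mrep j D0).

Lemma CM_MC x : CM x -> MC x.
Proof.
move=> cm G0 D0 dL k hk P S dR j hj.
have d := Dmix (Drep j dL) (Drep k dR).
have h1 : j * k <= count_mem x (mrep j G0 ++ mrep k P) by cf x.
have h2 : j * k <= count_mem x (mrep k S ++ mrep j D0) by cf x.
apply: (Dperm (cm _ _ d _ h1 h2)); solve_perm x.
Qed.

Lemma cutc x : MC x -> forall G0 D0 P S c, D G0 D0 -> c <= count_mem x G0 -> D P S -> c <= count_mem x S ->
  D (remk c x G0 ++ P) (remk c x S ++ D0).
Proof.
move=> mc G0 D0 P S c dL hL dR hR.
case: c hL hR => [|c] hL hR; first exact: Dmix dL dR.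
have d := mc _ _ dL _ hL _ _ dR _ hR.
apply: (Dsc (n := c.+1)) => //; apply: (Dperm d); rewrite /mrep; solve_perm x.
Qed.

Definition BoxCM x := forall G n p, D G (nseq n p) -> forall a, a <= count_mem x (map Box G) ->
  a <= count_mem x (nseq n (Box p)) -> D (remk a x (map Box G)) (remk a x (nseq n (Box p))).

Ltac solve_perm_r x rw := let y := fresh "y" in apply/allP => y _; apply/eqP; to_counts y;
  let E := fresh "E" in
  case: (eqVneq x y) => [E|E]; [rewrite -?E ?eqxx ?rw /= | rewrite ?(negbTE E) /=]; bsplit; intros; arith.
Ltac cf_r x rw := to_counts x; rewrite ?eqxx ?rw /=; intros; arith.

Lemma CM_gen x : (forall a b, (Imp a b == x) = false) -> MC x -> BoxCM x -> CM x.
Proof.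
move=> nimp mc hb G0 D0; elim => {G0 D0}.
- move=> Dl G' D' hG hD a h1 h2; apply: (Dperm (Did (remk a x G'))); solve_perm x.
- by [].
- move=> G Dl P S G' D' d1 IH1 d2 IH2 hG hD a h1 h2.
  case: (leqP a (minn (count_mem x G) (count_mem x Dl) + minn (count_mem x P) (count_mem x S))) => ha.
  + have e1 : minn a (minn (count_mem x G) (count_mem x Dl)) <= count_mem x G by cf x.
    have e2 : minn a (minn (count_mem x G) (count_mem x Dl)) <= count_mem x Dl by cf x.
    have e3 : a - minn a (minn (count_mem x G) (count_mem x Dl)) <= count_mem x P by cf x.
    have e4 : a - minn a (minn (count_mem x G) (count_mem x Dl)) <= count_mem x S by cf x.
    apply: (Dmixp (IH1 _ e1 e2) (IH2 _ e3 e4)); solve_perm x.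
  + have e1 : minn (count_mem x G) (count_mem x Dl) <= count_mem x G by cf x.
    have e2 : minn (count_mem x G) (count_mem x Dl) <= count_mem x Dl by cf x.
    have e3 : minn (count_mem x P) (count_mem x S) <= count_mem x P by cf x.
    have e4 : minn (count_mem x P) (count_mem x S) <= count_mem x S by cf x.
    have E1 := IH1 _ e1 e2; have E2 := IH2 _ e3 e4.
    move: ha e1 e2 e3 e4 E1 E2.
    move Em1 : (minn (count_mem x G) (count_mem x Dl)) => m1.
    move Em2 : (minn (count_mem x P) (count_mem x S)) => m2.
    move=> ha e1 e2 e3 e4 E1 E2.
    case: (leqP (count_mem x G) (count_mem x Dl)) => hc.
    * have f1 : a - m1 - m2 <= count_mem x (remk m2 x P) by cf x.
      have f2 : a - m1 - m2 <= count_mem x (remk m1 x Dl) by cf x.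
      apply: (Dperm (cutc mc E2 f1 E1 f2)); solve_perm x.
    * have f1 : a - m1 - m2 <= count_mem x (remk m1 x G) by cf x.
      have f2 : a - m1 - m2 <= count_mem x (remk m2 x S) by cf x.
      apply: (Dperm (cutc mc E1 f1 E2 f2)); solve_perm x.
- move=> n G Dl G' D' hn d IH hG hD a h1 h2.
  have e1 : n * a <= count_mem x (mrep n G) by cf x.
  have e2 : n * a <= count_mem x (mrep n Dl) by cf x.
  apply: (Dsc (n:=n)); first lia.
  apply: (Dperm (IH _ e1 e2)); rewrite /mrep; solve_perm x.
- move=> G Dl phi psi G' D' d IH hG hD a h1 h2.
  have e1 : a <= count_mem x (G ++ [:: psi]) by cf_r x nimp.
  have e2 : a <= count_mem x (phi :: Dl) by cf_r x nimp.
  have d2 : D (remk a x G ++ [:: psi]) (phi :: remk a x Dl).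
    apply: (Dperm (IH _ e1 e2)); solve_perm_r x nimp.
  apply: (Dperm (DimpL d2)); solve_perm_r x nimp.
- move=> G Dl phi psi G' D' d IH hG hD a h1 h2.
  have e1 : a <= count_mem x (G ++ [:: phi]) by cf_r x nimp.
  have e2 : a <= count_mem x (psi :: Dl) by cf_r x nimp.
  have d2 : D (remk a x G ++ [:: phi]) (psi :: remk a x Dl).
    apply: (Dperm (IH _ e1 e2)); solve_perm_r x nimp.
  apply: (Dperm (DimpR d2)); solve_perm_r x nimp.
- move=> n G phi G' D' d IH hG hD a h1 h2.
  have e1 : a <= count_mem x (map Box G) by cf x.
  have e2 : a <= count_mem x (nseq n (Box phi)) by cf x.
  apply: (Dperm (hb _ _ _ d _ e1 e2)); solve_perm x.
Qed.

Definition BoxMC x := forall P S, D P S -> forall j, j <= count_mem x S ->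
  forall G n p, D G (nseq n p) -> forall k, k <= count_mem x (map Box G) ->
  D (mrep j (remk k x (map Box G)) ++ mrep k P) (mrep k (remk j x S) ++ mrep j (nseq n (Box p))).

Lemma MC_gen x : (forall a b, (Imp a b == x) = false) -> BoxMC x -> MC x.
Proof.
move=> nimp hb G0 D0 dL k0 hk0 P S dR j hj; elim: dL k0 hk0 => {G0 D0}.
- move=> Dl G' D' hG hD k hk.
  apply: (Dmixp (Did (mrep j (remk k x G'))) (Drep k dR)); solve_perm x.
- by [].
- move=> G Dl Q T G' D' d1 IH1 d2 IH2 hG hD k hk.
  have e2 : k - minn k (count_mem x G) <= count_mem x Q by cf x.
  apply: (Dmixp (IH1 (minn k (count_mem x G)) (geq_minr _ _)) (IH2 _ e2)); solve_perm x.
- move=> n G Dl G' D' hn d IH hG hD k hk.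
  have e : n * k <= count_mem x (mrep n G) by cf x.
  apply: (Dsc (n:=n)); first lia.
  apply: (Dperm (IH _ e)); rewrite /mrep; solve_perm x.
- move=> G Dl phi psi G' D' d IH hG hD k hk.
  have e : k <= count_mem x (G ++ [:: psi]) by cf_r x nimp.
  have d2 : D ((mrep j (remk k x G) ++ mrep k P) ++ nseq j psi)
             (nseq j phi ++ (mrep k (remk j x S) ++ mrep j Dl)).
    apply: (Dperm (IH _ e)); rewrite /mrep; solve_perm_r x nimp.
  apply: (Dperm (DimpL_rep d2)); rewrite /mrep; solve_perm_r x nimp.
- move=> G Dl phi psi G' D' d IH hG hD k hk.
  have e : k <= count_mem x (G ++ [:: phi]) by cf_r x nimp.
  have d2 : D ((mrep j (remk k x G) ++ mrep k P) ++ nseq j phi)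
             (nseq j psi ++ (mrep k (remk j x S) ++ mrep j Dl)).
    apply: (Dperm (IH _ e)); rewrite /mrep; solve_perm_r x nimp.
  apply: (Dperm (DimpR_rep d2)); rewrite /mrep; solve_perm_r x nimp.
- move=> n G phi G' D' d IH hG hD k hk.
  have e : k <= count_mem x (map Box G) by cf x.
  apply: (Dperm (hb _ _ dR _ hj _ _ _ d _ e)); solve_perm x.
Qed.

Lemma count_mapBox y s : count_mem y (map Box s) = if y is Box z then count_mem z s else 0.
Proof. case: y => [v|a b|z]; by rewrite ?count_box_var ?count_box_imp ?count_box_box. Qed.

Lemma map_box_perm m k phi G H : k <= count_mem phi G ->
  perm_eq (mrep m (remk k (Box phi) (map Box G)) ++ mrep k (map Box H))
          (map Box (mrep m (remk k phi G) ++ mrep k H)).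
Proof.
move=> hk; apply/allP => y _; apply/eqP.
rewrite map_cat !count_cat !count_mapBox !count_mrep !count_remk !count_mapBox.
case: y => [v|a b|z] /=; rewrite ?eq_box_var ?eq_box_imp ?eq_box_box ?count_mrep ?count_remk //=; lia.
Qed.

Lemma box_inner phi : MC phi -> BoxMC (Box phi).
Proof.
move=> mc P0 S0 dR j0 hj0 G n psi dG k hk.
have hk' : k <= count_mem phi G by rewrite count_box_box in hk.
have nimpB : forall a b, (Imp a b == Box phi) = false by move=> a b; apply/eqP.
have LB := Dbox dG.
elim: dR j0 hj0 => {P0 S0}.
- move=> Dl P' S' hP hS j hj.
  apply: (Dmixp (Drep j LB) (Did (mrep k (remk j (Box phi) S')))); solve_perm (Box phi).
- by [].
- move=> Q T P2 S2 P' S' d1 IH1 d2 IH2 hP hS j hj.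
  have e2 : j - minn j (count_mem (Box phi) T) <= count_mem (Box phi) S2 by cf (Box phi).
  apply: (Dmixp (IH1 (minn j (count_mem (Box phi) T)) (geq_minr _ _)) (IH2 _ e2)); solve_perm (Box phi).
- move=> n' Q T P' S' hn d IH hP hS j hj.
  have e : n' * j <= count_mem (Box phi) (mrep n' T) by cf (Box phi).
  apply: (Dsc (n:=n')); first lia.
  apply: (Dperm (IH _ e)); solve_perm (Box phi).
- move=> Q T a b P' S' d IH hP hS j hj.
  have e : j <= count_mem (Box phi) (a :: T) by cf_r (Box phi) nimpB.
  have d2 : D ((mrep j (remk k (Box phi) (map Box G)) ++ mrep k Q) ++ nseq k b)
             (nseq k a ++ (mrep k (remk j (Box phi) T) ++ mrep j (nseq n (Box psi)))).
    apply: (Dperm (IH _ e)); solve_perm_r (Box phi) nimpB.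
  apply: (Dperm (DimpL_rep d2)); solve_perm_r (Box phi) nimpB.
- move=> Q T a b P' S' d IH hP hS j hj.
  have e : j <= count_mem (Box phi) (b :: T) by cf_r (Box phi) nimpB.
  have d2 : D ((mrep j (remk k (Box phi) (map Box G)) ++ mrep k Q) ++ nseq k a)
             (nseq k b ++ (mrep k (remk j (Box phi) T) ++ mrep j (nseq n (Box psi)))).
    apply: (Dperm (IH _ e)); solve_perm_r (Box phi) nimpB.
  apply: (Dperm (DimpR_rep d2)); solve_perm_r (Box phi) nimpB.
- move=> m H chi P' S' dH IHH hP hS j hj.
  case: j hj => [|j1] hj.
    apply: (Dperm (Drep k (Dbox dH))); solve_perm (Box phi).
  have Ec : chi = phi.
    apply/eqP; case E: (chi == phi) => //; exfalso.
    move: hj; to_counts (Box phi); rewrite eq_box_box E /=; intros; lia.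
  subst chi. set j := j1.+1 in hj *.
  have hm : j <= m by move: hj; to_counts (Box phi); rewrite eqxx /=; intros; lia.
  have hm' : m <= count_mem phi (nseq m phi) by rewrite count_nseq /= eqxx mul1n.
  have C0 := mc _ _ dG _ hk' _ _ dH _ hm'.
  have C1 : D (mrep m (remk k phi G) ++ mrep k H) (nseq (m * n) psi).
    apply: (Dperm C0); solve_perm phi.
  have B0 := Dbox C1.
  have B : D (mrep m (remk k (Box phi) (map Box G)) ++ mrep k (map Box H)) (nseq (m * n) (Box psi)).
    apply: (Dperm B0); [exact: map_box_perm | by []].
  have R := Dbox dH.
  apply: (Dsc (n:=m)); first lia.
  apply: (Dperm (Dmix (Drep j B) (Drep (k * (m - j)) R))); solve_perm (Box phi).
Qed.

Lemma imp_neq_l a b : Imp a b <> a.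
Proof. elim: a b => // a1 IH1 a2 _ b [] E _; exact: (IH1 _ E). Qed.
Lemma imp_neq_r a b : Imp a b <> b.
Proof. elim: b a => // b1 _ b2 IH2 a [] _ E; exact: (IH2 _ E). Qed.


Lemma perm_remk_cat k z s : perm_eq (remk k z (s ++ nseq k z)) s.
Proof. apply/allP => y _; apply/eqP; rewrite count_remk count_cat count_nseq /=; lia. Qed.
Lemma perm_remk_cat' k z s : perm_eq (remk k z (nseq k z ++ s)) s.
Proof. apply/allP => y _; apply/eqP; rewrite count_remk count_cat count_nseq /=; lia. Qed.

Lemma CM_imp a b : CM a -> CM b -> CM (Imp a b).
Proof.
move=> ca cb G0 D0 d A h1 h2.
have na : (a == Imp a b) = false by apply/eqP => /esym/imp_neq_l.
have nb : (b == Imp a b) = false by apply/eqP => /esym/imp_neq_r.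
have d1 := InvL (erefl (Imp a b)) d h1.
have h : A <= count_mem (Imp a b) (nseq A a ++ D0) by cf (Imp a b).
have d2 := InvR (erefl (Imp a b)) d1 h.
have d2' : D ((remk A (Imp a b) G0 ++ nseq A b) ++ nseq A a)
             ((nseq A b ++ remk A (Imp a b) D0) ++ nseq A a).
  apply: (Dperm d2) => //; solve_perm_r (Imp a b) na.
have e1 : A <= count_mem a ((remk A (Imp a b) G0 ++ nseq A b) ++ nseq A a).
  by rewrite count_cat count_nseq /= eqxx; lia.
have e2 : A <= count_mem a ((nseq A b ++ remk A (Imp a b) D0) ++ nseq A a).
  by rewrite count_cat count_nseq /= eqxx; lia.
have d3 := ca _ _ d2' _ e1 e2.
have d3' : D (remk A (Imp a b) G0 ++ nseq A b) (nseq A b ++ remk A (Imp a b) D0).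
  by apply: (Dperm d3); rewrite perm_sym; apply: perm_remk_cat.
have f1 : A <= count_mem b (remk A (Imp a b) G0 ++ nseq A b).
  by rewrite count_cat count_nseq /= eqxx; lia.
have f2 : A <= count_mem b (nseq A b ++ remk A (Imp a b) D0).
  by rewrite count_cat count_nseq /= eqxx; lia.
have d4 := cb _ _ d3' _ f1 f2.
apply: (Dperm d4); rewrite perm_sym; [apply: perm_remk_cat | apply: perm_remk_cat'].
Qed.

Lemma map_box_remk k phi G : perm_eq (remk k (Box phi) (map Box G)) (map Box (remk k phi G)).
Proof.
apply/allP => y _; apply/eqP.
rewrite !count_mapBox !count_remk !count_mapBox.
case: y => [v|a b|z] /=; rewrite ?eq_box_var ?eq_box_imp ?eq_box_box ?count_remk //=; lia.
Qed.

Lemma CM_all x : CM x.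
Proof.
elim: x => [v|a IHa b IHb|p IHp].
- have nimp : forall a b, (Imp a b == Var v) = false by move=> a b; apply/eqP.
  have hb : BoxMC (Var v).
    move=> P S dR j hj G n p d k hk.
    rewrite count_box_var in hk; move: hk; rewrite leqn0 => /eqP ->.
    apply: (Dperm (Drep j (Dbox d))); solve_perm0.
  have hc : BoxCM (Var v).
    move=> G n p d a h1 h2.
    rewrite count_box_var in h1; move: h1; rewrite leqn0 => /eqP ->.
    exact: Dbox d.
  exact: (CM_gen nimp (MC_gen nimp hb) hc).
- exact: CM_imp.
- have nimp : forall a b, (Imp a b == Box p) = false by move=> a b; apply/eqP.
  have mc := MC_gen nimp (box_inner (CM_MC IHp)).
  have hc : BoxCM (Box p).
    move=> G n q d a h1 h2.
    case: a h1 h2 => [|a1] h1 h2; first exact: Dbox d.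
    have Eq : q = p.
      apply/eqP; case E: (q == p) => //; exfalso.
      move: h2; rewrite count_nseq /= eq_box_box E; lia.
    subst q.
    have e1 : a1.+1 <= count_mem p G by rewrite count_box_box in h1.
    have e2 : a1.+1 <= count_mem p (nseq n p) by move: h2; rewrite !count_nseq /= eq_box_box eqxx.
    have d1 := IHp _ _ d _ e1 e2.
    have d2 : D (remk a1.+1 p G) (nseq (n - a1.+1) p).
      apply: (Dperm d1) => //; solve_perm p.
    apply: (Dperm (Dbox d2)); first exact: map_box_remk.
    solve_perm (Box p).
  exact: (CM_gen nimp mc hc).
Qed.

Theorem theorem4p6 (G D : seq form) : GK true G D -> GK false G D.
Proof.
elim => {G D}.
- move=> Dl G' D' h1 h2; exact: GK_id h1 h2.
- move=> G P S Dl phi G' D' _ d1 IH1 d2 IH2 hG hD.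
  have e1 : 1 <= count_mem phi (G ++ [:: phi]) by rewrite count_cat /= eqxx; lia.
  have e2 : 1 <= count_mem phi (phi :: S) by rewrite /= eqxx.
  have mc : MC phi := CM_MC (@CM_all phi).
  have d := mc _ _ IH1 1 e1 _ _ IH2 1 e2.
  rewrite !mrep1 in d; apply: (Dperm d).
  + apply: (perm_trans hG); rewrite perm_cat2r perm_sym; exact: (perm_remk_cat 1 phi G).
  + apply: (perm_trans hD); rewrite perm_cat2r perm_sym; exact: (perm_remk_cat' 1 phi S).
- move=> G Dl P S G' D' _ IH1 _ IH2 hG hD; exact: GK_mix IH1 IH2 hG hD.
- move=> n G Dl G' D' hn _ IH hG hD; exact: GK_sc hn IH hG hD.
- move=> G Dl phi psi G' D' _ IH hG hD; exact: GK_impL IH hG hD.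
- move=> G Dl phi psi G' D' _ IH hG hD; exact: GK_impR IH hG hD.
- move=> n G phi G' D' _ IH hG hD; exact: GK_box IH hG hD.
Qed.
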